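(* Let $\gamma(X,R)$ be a time-series constraint of the family $\mathrm{nb}\_\sigma$ or $\mathrm{sum\_width}\_\sigma$ that satisfies the gap-to-loss, boundedness and disjointedness conditions, and let $\delta\in\mathbb{N}$. Then for every ground time series $X$, $\mathrm{Gap}_\gamma(X)=\delta$ if and only if $\mathrm{Loss}_\gamma(X)$ belongs to the loss interval $L(\delta,\mathrm{sgn}(R))$, where $R$ is the value yielded by $X$.
   Context: Signature of $X=\langle X_1,\dots,X_n\rangle$: the word $\langle S_1,\dots,S_{n-1}\rangle$ over $\{<,=,>\}$ with $S_i$ given by comparing $X_i$ and $X_{i+1}$. For a regular expression $\sigma$ over $\{<,=,>\}$ with integer constants $b_\sigma,a_\sigma$, whenever $\langle S_i,\dots,S_j\rangle$ is a maximal word matching $\sigma$, $\langle X_{i+b_\sigma},\dots,X_{j+1-a_\sigma}\rangle$ is a $\sigma$-pattern; $\mathrm{nb}\_\sigma(X,R)$: $R$ is the number of $\sigma$-patterns; $\mathrm{sum\_width}\_\sigma(X,R)$: $R$ is the total number of elements of all $\sigma$-patterns (0 if none). A ground time series is a fixed non-empty integer sequence. Gap: $\mathrm{Gap}_\gamma(X)$ is the maximum value of $R$ over all time series of length $n$ minus the value of $R$ yielded by $X$. Loss: $\mathrm{Loss}_\gamma(X)$ is $n$ minus the length of a shortest time series yielding the same value of $R$ as $X$. $\mathrm{sgn}$ is the signum function. Gap-to-loss condition: there is a function $h$ with $\mathrm{Loss}_\gamma(X)=h(\mathrm{Gap}_\gamma(X),\mathrm{sgn}(R),n)$ for every ground time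 series $X$ of length $n$. Boundedness condition: for every $\delta\in\mathbb{N}$ and $s\in\{0,1\}$ there is a bounded integer interval $L(\delta,s)$, called the loss interval w.r.t. $\langle\delta,s\rangle$, containing $h(\delta,s,n)$ for every $n\in\mathbb{N}$. Disjointedness condition: for each $s\in\{0,1\}$ and $\delta_1\neq\delta_2$, $L(\delta_1,s)\cap L(\delta_2,s)=\emptyset$. *)

(* Defs.v *)
From mathcomp Require Import all_boot all_order all_algebra.
From Stdlib Require Import ClassicalEpsilon.
Set Implicit Arguments. Unset Strict Implicit. Unset Printing Implicit Defensive.
Import Order.TTheory GRing.Theory Num.Theory.

Inductive sym := SLt | SEq | SGt.

Inductive regex :=
| RVoid | REps | RChr of sym
| RCat of regex & regex | RAlt of regex & regex | RStar of regex.

Inductive rmatch : regex -> seq sym -> Prop :=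
| MEps : rmatch REps [::]
| MChr c : rmatch (RChr c) [:: c]
| MAltL r1 r2 w : rmatch r1 w -> rmatch (RAlt r1 r2) w
| MAltR r1 r2 w : rmatch r2 w -> rmatch (RAlt r1 r2) w
| MCat r1 r2 w1 w2 : rmatch r1 w1 -> rmatch r2 w2 -> rmatch (RCat r1 r2) (w1 ++ w2)
| MStar0 r : rmatch (RStar r) [::]
| MStarS r w1 w2 : rmatch r w1 -> rmatch (RStar r) w2 -> rmatch (RStar r) (w1 ++ w2).

Definition pbool (P : Prop) : bool :=
  if excluded_middle_informative P then true else false.

Definition cmpz (x y : int) : sym :=
  if (x < y)%R then SLt else if x == y then SEq else SGt.

Definition signature (X : seq int) : seq sym :=
  [seq cmpz p.1 p.2 | p <- zip X (behead X)].

(* The factor <S_i, ..., S_j> (0-based indices). *)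
Definition factor (S : seq sym) (i j : nat) : seq sym := take (j - i).+1 (drop i S).

Definition maxocc (sigma : regex) (S : seq sym) (p : nat * nat) : Prop :=
  let: (i, j) := p in
  [/\ i <= j, j < size S, rmatch sigma (factor S i j) &
      forall i' j', i' <= i -> j <= j' -> j' < size S ->
        rmatch sigma (factor S i' j') -> i' = i /\ j' = j].

Definition occs (sigma : regex) (S : seq sym) : seq (nat * nat) :=
  [seq p <- [seq (i, j) | i <- iota 0 (size S), j <- iota 0 (size S)]
     | pbool (maxocc sigma S p)].

(* Number of elements of the sigma-pattern <X_{i+b}, ..., X_{j+1-a}>. *)
Definition pwidth (b a : int) (p : nat * nat) : nat :=
  let w := ((p.2%:Z + 1 - a) - (p.1%:Z + b) + 1)%R in
  if (w <= 0)%R then 0 else absz w.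

Inductive ts_family := Nb | SumWidth.

Definition gamma (fam : ts_family) (sigma : regex) (b a : int) (X : seq int) : nat :=
  match fam with
  | Nb => size (occs sigma (signature X))
  | SumWidth => sumn [seq pwidth b a p | p <- occs sigma (signature X)]
  end.

Definition IsGap (gam : seq int -> nat) (X : seq int) (g : nat) : Prop :=
  exists M : nat,
    [/\ exists Y, size Y = size X /\ gam Y = M,
        forall Y, size Y = size X -> gam Y <= M &
        g = M - gam X].

Definition IsLoss (gam : seq int -> nat) (X : seq int) (l : nat) : Prop :=
  exists m : nat,
    [/\ exists Y, [/\ size Y = m, 0 < m & gam Y = gam X],
        forall Y, 0 < size Y -> gam Y = gam X -> m <= size Y &
        l = size X - m].

Definition sgn (r : nat) : nat := if r == 0 then 0 else 1.

(* Main.v *)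
Require Import Defs.
From mathcomp Require Import all_boot all_order all_algebra.
From Stdlib Require Import ClassicalEpsilon.
From mathcomp Require Import zify.
Import Order.TTheory GRing.Theory Num.Theory.

Lemma pboolP (P : Prop) : reflect P (pbool P).
Proof. rewrite /pbool; case: excluded_middle_informative => H; by constructor. Qed.

Lemma ex_max_prop (P : nat -> Prop) B : (exists m, P m) -> (forall m, P m -> m <= B) ->
  exists M, P M /\ forall m, P m -> m <= M.
Proof.
move=> [m0 Hm0] HB.
have ex : exists m, pbool (P m) by exists m0; apply/pboolP.
have bd : forall m, pbool (P m) -> m <= B by move=> m /pboolP; apply: HB.
case: (ex_maxnP ex bd) => M /pboolP HM Hmax.
exists M; split => // m Hm; apply: Hmax; exact/pboolP.
Qed.

Lemma ex_min_prop (P : nat -> Prop) : (exists m, P m) ->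
  exists M, P M /\ forall m, P m -> M <= m.
Proof.
move=> [m0 Hm0].
have ex : exists m, pbool (P m) by exists m0; apply/pboolP.
case: (ex_minnP ex) => M /pboolP HM Hmin.
exists M; split => // m Hm; apply: Hmin; exact/pboolP.
Qed.

Definition allp (k : nat) := [seq (i, j) | i <- iota 0 k, j <- iota 0 k].

Lemma size_sig Y : size (signature Y) = (size Y).-1.
Proof. by rewrite /signature size_map size_zip size_behead; case: (size Y) => //= n; rewrite minnE; lia. Qed.

Lemma gamma_bound fam sg b a Y :
  gamma fam sg b a Y <= match fam with
    | Nb => size (allp (size Y).-1)
    | SumWidth => sumn [seq pwidth b a p | p <- allp (size Y).-1] end.
Proof.
rewrite /gamma /occs -size_sig -/(allp _).
case: fam.
  by rewrite size_filter count_size.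
elim: (allp _) => //= p s IH.
case: (pbool _) => /=; first by rewrite leq_add2l.
exact: leq_trans IH (leq_addl _ _).
Qed.

Theorem lemma1 (fam : ts_family) (sg : regex) (b a : int)
  (h : nat -> nat -> nat -> nat) (Llo Lhi : nat -> nat -> int)
  (gap_to_loss : forall X : seq int, 0 < size X -> forall g l : nat,
      IsGap (gamma fam sg b a) X g -> IsLoss (gamma fam sg b a) X l ->
      l = h g (sgn (gamma fam sg b a X)) (size X))
  (boundedness : forall (d s : nat), s <= 1 -> forall n : nat,
      (Llo d s <= (h d s n)%:Z <= Lhi d s)%R)
  (disjointedness : forall (s : nat), s <= 1 -> forall d1 d2 : nat, d1 <> d2 ->
      forall z : int, ~ ((Llo d1 s <= z <= Lhi d1 s)%R /\ (Llo d2 s <= z <= Lhi d2 s)%R))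
  (d : nat) (X : seq int) (HX : 0 < size X) :
  IsGap (gamma fam sg b a) X d <->
  exists l : nat, IsLoss (gamma fam sg b a) X l /\
    (Llo d (sgn (gamma fam sg b a X)) <= l%:Z <= Lhi d (sgn (gamma fam sg b a X)))%R.
Proof.
set gam := gamma fam sg b a.
have hs : sgn (gam X) <= 1 by rewrite /sgn; case: (_ == 0).
have Loss : exists l, IsLoss gam X l.
  have [M [[Y [HY1 HY2 HY3]] HM]] := ex_min_prop
    (fun m => exists Y, [/\ size Y = m, 0 < m & gam Y = gam X])
    (ex_intro _ (size X) (ex_intro _ X (And3 erefl HX erefl))).
  exists (size X - M), M; split => //.
    by exists Y.
  move=> Z HZ1 HZ2; apply: HM; by exists Z.
have Gap : exists g, IsGap gam X g.
  have bnd : forall m, (exists Y, size Y = size X /\ gam Y = m) -> m <= match fam with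
    | Nb => size (allp (size X).-1)
    | SumWidth => sumn [seq pwidth b a p | p <- allp (size X).-1] end.
    by move=> m [Z [<- <-]]; exact: gamma_bound.
  have [M [[Y [HY1 HY2]] HM]] := ex_max_prop
    (fun m => exists Y, size Y = size X /\ gam Y = m)
    (match fam with
    | Nb => size (allp (size X).-1)
    | SumWidth => sumn [seq pwidth b a p | p <- allp (size X).-1] end)
    (ex_intro _ (gam X) (ex_intro _ X (conj erefl erefl)))
    bnd.
  exists (M - gam X), M; split => //.
    by exists Y.
  move=> Z HZ; apply: HM; by exists Z.
split.
  move=> Hg; case: Loss => l Hl; exists l; split => //.
  rewrite (gap_to_loss X HX d l Hg Hl); exact: boundedness.
move=> [l [Hl Hin]]; case: Gap => g Hg.
have E := gap_to_loss X HX g l Hg Hl.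
have -> : d = g; last by [].
case: (eqVneq d g) => // /eqP Hne; exfalso.
apply: (disjointedness _ hs d g Hne (Posz l)); split => //.
rewrite E; exact: boundedness.
Qed.
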